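(* Let $G$ be a neighborhood unit square graph with $V(G)\neq\emptyset$. Let $X$ be the set of vertices $v\in V(G)$ for which there exist vertices $w_1,\dots,w_6\in V(G)\setminus\{v\}$ with $vw_i\notin E(G)$ for all $i\in[6]$ and $G[\{w_1,\dots,w_6\}]\cong S_3$. Then $X\ne V(G)$.
   Context: A neighborhood unit square graph is a graph $G$ admitting a map $f\colon V(G)\to[-1,1]^2$ such that for distinct $v,w$, $vw\in E(G)$ iff $\|f(v)-f(w)\|_\infty\le1$. $S_3$ (the 3-sun) is the graph on $w_1,\dots,w_6$ with edges $w_4w_5,w_5w_6,w_4w_6$ (a triangle), $w_1w_4,w_1w_6$, $w_2w_4,w_2w_5$, $w_3w_5,w_3w_6$. *)

(* Defs.v *)
From mathcomp Require Import all_boot.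
From Stdlib Require Import Reals.

Set Implicit Arguments.
Unset Strict Implicit.
Unset Printing Implicit Defensive.

Definition linf_dist (p q : R * R) : R :=
  Rmax (Rabs (fst p - fst q)%R) (Rabs (snd p - snd q)%R).

Definition nbhd_unit_square_graph (T : finType) (e : rel T) : Prop :=
  exists f : T -> R * R,
    (forall v, (-1 <= fst (f v) <= 1)%R /\ (-1 <= snd (f v) <= 1)%R) /\
    (forall v w, v <> w -> (e v w <-> (linf_dist (f v) (f w) <= 1)%R)).

(* The 3-sun S_3 on vertices w_1..w_6, indexed 0..5. *)
Definition s3_edge (i j : nat) : bool :=
  [|| (i == 3) && (j == 4), (i == 4) && (j == 5), (i == 3) && (j == 5),
      (i == 0) && (j == 3), (i == 0) && (j == 5), (i == 1) && (j == 3),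
      (i == 1) && (j == 4), (i == 2) && (j == 4) | (i == 2) && (j == 5)].

Definition s3_adj (i j : 'I_6) : bool := s3_edge i j || s3_edge j i.

Definition in_X (T : finType) (e : rel T) (v : T) : Prop :=
  exists w : 'I_6 -> T,
    injective w /\
    (forall i, w i <> v /\ ~ e v (w i)) /\
    (forall i j, i <> j -> (e (w i) (w j) <-> s3_adj i j)).

(* Main.v *)
Require Import Defs.
From mathcomp Require Import all_boot.
From Stdlib Require Import Reals Lra.

Set Implicit Arguments.
Unset Strict Implicit.
Unset Printing Implicit Defensive.

Local Open Scope R_scope.

Lemma core (a m x0 y0 x1 y1 x2 y2 x3 y3 x4 y4 x5 y5 : R) (c0 : -m <= 0) (c1 : m - a <= 0) (c2 : a <= 1) (c3 : x0 <= 1) (c4 : -x0 <= 1) (c5 : y0 <= 1) (c6 : -y0 <= 1) (c7 : x1 <= 1) (c8 : -x1 <= 1) (c9 : y1 <= 1) (c10 : -y1 <= 1) (c11 : x2 <= 1) (c12 : -x2 <= 1) (c13 : y2 <= 1) (c14 : -y2 <= 1) (c15 : x3 <= 1) (c16 : -x3 <= 1) (c17 : y3 <= 1) (c18 : -y3 <= 1) (c19 : x4 <= 1) (c20 : -x4 <= 1) (c21 : y4 <= 1) (c22 : -y4 <= 1) (c23 : x5 <= 1) (c24 : -x5 <= 1) (c25 : y5 <= 1) (c26 : -y5 <= 1) (c27 : x3 - x4 <= 1) (c28 : x4 - x3 <= 1) (c29 : y3 - y4 <= 1) (c30 : y4 - y3 <= 1) (c31 : x4 - x5 <= 1) (c32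 : x5 - x4 <= 1) (c33 : y4 - y5 <= 1) (c34 : y5 - y4 <= 1) (c35 : x3 - x5 <= 1) (c36 : x5 - x3 <= 1) (c37 : y3 - y5 <= 1) (c38 : y5 - y3 <= 1) (c39 : x0 - x3 <= 1) (c40 : x3 - x0 <= 1) (c41 : y0 - y3 <= 1) (c42 : y3 - y0 <= 1) (c43 : x0 - x5 <= 1) (c44 : x5 - x0 <= 1) (c45 : y0 - y5 <= 1) (c46 : y5 - y0 <= 1) (c47 : x1 - x3 <= 1) (c48 : x3 - x1 <= 1) (c49 : y1 - y3 <= 1) (c50 : y3 - y1 <= 1) (c51 : x1 - x4 <= 1) (c52 : x4 - x1 <= 1) (c53 : y1 - y4 <= 1) (c54 : y4 - y1 <= 1) (c55 : x2 - x4 <= 1) (c56 : x4 - x2 <= 1) (c57 : y2 - y4 <= 1) (c58 : y4 - y2 <= 1) (c59 : x2 - x5 <= 1) (c60 : x5 - x2 <= 1) (c61 : y2 - y5 <= 1) (c62 : y5 - y2 <= 1) (QX0 : (m <= x0 \/ x0 <= -m)) (QY0 : (m <= y0 \/ y0 <= -m)) (V0 : (x0 - a > 1 \/ a - x0 > 1 \/ y0 - m > 1 \/ m - y0 > 1)) (QX1 : (m <= x1 \/ x1 <= -m)) (QY1 : (m <= y1 \/ y1 <= -m)) (V1 : (x1 - a > 1 \/ a - x1 > 1 \/ y1 - m > 1 \/ m - y1 > 1)) (QX2 : (m <= x2 \/ x2 <= -m)) (QY2 : (m <= y2 \/ y2 <= -m)) (V2 : (x2 - a > 1 \/ a - x2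 > 1 \/ y2 - m > 1 \/ m - y2 > 1)) (QX3 : (m <= x3 \/ x3 <= -m)) (QY3 : (m <= y3 \/ y3 <= -m)) (V3 : (x3 - a > 1 \/ a - x3 > 1 \/ y3 - m > 1 \/ m - y3 > 1)) (QX4 : (m <= x4 \/ x4 <= -m)) (QY4 : (m <= y4 \/ y4 <= -m)) (V4 : (x4 - a > 1 \/ a - x4 > 1 \/ y4 - m > 1 \/ m - y4 > 1)) (QX5 : (m <= x5 \/ x5 <= -m)) (QY5 : (m <= y5 \/ y5 <= -m)) (V5 : (x5 - a > 1 \/ a - x5 > 1 \/ y5 - m > 1 \/ m - y5 > 1)) (N01 : (x0 - x1 > 1 \/ x1 - x0 > 1 \/ y0 - y1 > 1 \/ y1 - y0 > 1)) (N02 : (x0 - x2 > 1 \/ x2 - x0 > 1 \/ y0 - y2 > 1 \/ y2 - y0 > 1)) (N12 : (x1 - x2 > 1 \/ x2 - x1 > 1 \/ y1 - y2 > 1 \/ y2 - y1 > 1)) (N04 : (x0 - x4 > 1 \/ x4 - x0 > 1 \/ y0 - y4 > 1 \/ y4 - y0 > 1)) (N15 : (x1 - x5 > 1 \/ x5 - x1 > 1 \/ y1 - y5 > 1 \/ y5 - y1 > 1)) (N23 : (x2 - x3 > 1 \/ x3 - x2 > 1 \/ y2 - y3 > 1 \/ y3 - y2 > 1)) : False.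
Proof.
destruct QX0 as [QX0|QX0]; [ destruct V0 as [V0|[V0|[V0|V0]]]; [ (clear - c0 c1 c3 V0; lra) | (clear - c0 c2 QX0 V0; lra) | (clear - c0 c5 V0; lra) | destruct QY0 as [QY0|QY0]; [ (clear - V0 QY0; lra) | destruct QY3 as [QY3|QY3]; [ (clear - c42 V0 QY3; lra) | destruct QY5 as [QY5|QY5]; [ (clear - c46 V0 QY5; lra) | destruct QX1 as [QX1|QX1]; [ destruct V1 as [V1|[V1|[V1|V1]]]; [ (clear - c1 c6 c7 V0 V1; lra) | (clear - c2 c6 V0 QX1 V1; lra) | (clear - c42 c49 V0 V1; lra) | destruct QY1 as [QY1|QY1]; [ (clear - V1 QY1; lra) | destruct QY4 as [QY4|QY4]; [ (clear - c54 V1 QY4; lra) | destruct N01 as [N01|[N01|[N01|N01]]]; [ (clear - c3 c10 QX1 V1 N01; lra) | (clear - c7 c10 QX0 V1 N01; lra) | (clear - c10 QY0 V1 N01; lra) | (clear - c6 V1 QY1 N01; lra) ] ] ] ] | destruct QY1 as [QY1|QY1]; [ destruct V1 as [V1|[V1|[V1|V1]]]; [ (clear - c1 c6 V0 QX1 V1; lra) | destruct V3 as [V3|[V3|[V3|V3]]]; [ (clear - c48 V1 V3; lra) | destruct QX3 as [QX3|QX3]; [ (clear - c2 c6 V0 V3 QX3; lra) | destruct V4 as [V4|[V4|[V4|V4]]]; [ (clear - c52 V1 V4; lra) | destruct QX4 as [QX4|QX4]; [ (clear - c2 c6 V0 V4 QX4; lra) | destruct QX2 as [QX2|QX2]; [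 destruct V2 as [V2|[V2|[V2|V2]]]; [ (clear - c55 V4 V2; lra) | (clear - c2 c6 V0 QX2 V2; lra) | (clear - c46 c61 V0 V2; lra) | destruct QY2 as [QY2|QY2]; [ (clear - V2 QY2; lra) | destruct QY4 as [QY4|QY4]; [ (clear - c58 V2 QY4; lra) | destruct N02 as [N02|[N02|[N02|N02]]]; [ (clear - c14 c39 QX3 QX2 V2 N02; lra) | (clear - c14 c55 QX0 QX4 V2 N02; lra) | (clear - c53 c58 V0 QY1 N02; lra) | (clear - c42 c49 QY1 V2 N02; lra) ] ] ] ] | destruct N12 as [N12|[N12|[N12|N12]]]; [ (clear - c6 c12 V0 QX1 N12; lra) | (clear - c6 c8 V0 QX2 N12; lra) | destruct QY2 as [QY2|QY2]; [ (clear - c42 c49 V0 N12 QY2; lra) | destruct N02 as [N02|[N02|[N02|N02]]]; [ destruct N23 as [N23|[N23|[N23|N23]]]; [ (clear - c39 N02 N23; lra) | (clear - c6 c12 V0 QX3 N23; lra) | (clear - c49 N12 N23; lra) | (clear - c14 c42 V0 QY3 N23; lra) ] | (clear - c6 QX0 V0 QX2 N02; lra) | (clear - c53 c58 V0 QY1 N02; lra) | (clear - c42 c49 N12 N02; lra) ] ] | (clear - c46 c61 V0 QY1 N12; lra) ] ] ] | (clear - c33 c46 V0 V4; lra) | (clear - c53 QY1 V4; lra) ] ] | (clear - c42 V0 V3; lra) | (clear - c49 QY1 V3; lra) ] | (clear - c42 c49 V0 V1; lra) | (clear - QY1 V1; lra) ] | destruct N01 as [N01|[N01|[N01|N01]]];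 [ destruct N15 as [N15|[N15|[N15|N15]]]; [ (clear - c43 N01 N15; lra) | destruct QX5 as [QX5|QX5]; [ destruct V5 as [V5|[V5|[V5|V5]]]; [ (clear - c1 c6 c23 V0 V5; lra) | (clear - c2 c8 N15 V5; lra) | (clear - c46 V0 V5; lra) | destruct QY2 as [QY2|QY2]; [ (clear - c61 V5 QY2; lra) | destruct QY4 as [QY4|QY4]; [ (clear - c33 V5 QY4; lra) | destruct N02 as [N02|[N02|[N02|N02]]]; [ destruct QX2 as [QX2|QX2]; [ (clear - c3 c26 V5 N02 QX2; lra) | destruct N12 as [N12|[N12|[N12|N12]]]; [ (clear - c60 N15 N12; lra) | (clear - c39 c48 N02 N12; lra) | (clear - c14 c26 QY1 V5 N12; lra) | (clear - c10 c61 V5 QY2 N12; lra) ] ] | (clear - c52 c55 N01 N02; lra) | (clear - c14 V0 QY2 N02; lra) | (clear - c6 V0 QY2 N02; lra) ] ] ] ] | (clear - c6 c8 V0 N15 QX5; lra) ] | (clear - c6 c26 V0 QY1 N15; lra) | (clear - c10 c46 V0 QY5 N15; lra) ] | (clear - c6 QX0 V0 QX1 N01; lra) | (clear - c10 V0 QY1 N01; lra) | (clear - c6 V0 QY1 N01; lra) ] ] ] ] ] ] ] | destruct QY0 as [QY0|QY0]; [ destruct V0 as [V0|[V0|[V0|V0]]]; [ (clear - c0 c1 QX0 V0; lra) | destruct V3 as [V3|[V3|[V3|V3]]]; [ (clear - c40 V0 V3; lra) | destruct QX3 as [QX3|QX3]; [ (clear - c0 c2 V3 QX3; lra) | destruct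 V5 as [V5|[V5|[V5|V5]]]; [ (clear - c44 V0 V5; lra) | destruct QX5 as [QX5|QX5]; [ (clear - c0 c2 V5 QX5; lra) | destruct QX1 as [QX1|QX1]; [ destruct V1 as [V1|[V1|[V1|V1]]]; [ (clear - c47 V3 V1; lra) | (clear - c0 c2 QX1 V1; lra) | (clear - c0 c9 V1; lra) | destruct QY1 as [QY1|QY1]; [ (clear - V1 QY1; lra) | destruct QY3 as [QY3|QY3]; [ (clear - c50 V1 QY3; lra) | destruct QY4 as [QY4|QY4]; [ (clear - c54 V1 QY4; lra) | destruct QX2 as [QX2|QX2]; [ destruct V2 as [V2|[V2|[V2|V2]]]; [ (clear - c59 V5 V2; lra) | (clear - c2 c10 V1 QX2 V2; lra) | (clear - c54 c57 V1 V2; lra) | destruct QY2 as [QY2|QY2]; [ (clear - V2 QY2; lra) | destruct QY5 as [QY5|QY5]; [ (clear - c62 V2 QY5; lra) | destruct N12 as [N12|[N12|[N12|N12]]]; [ (clear - c14 c47 QX3 QX2 V2 N12; lra) | (clear - c14 c59 QX5 QX1 V2 N12; lra) | (clear - c45 c62 QY0 V1 N12; lra) | (clear - c41 c50 QY0 V2 N12; lra) ] ] ] ] | destruct N02 as [N02|[N02|[N02|N02]]]; [ (clear - c10 c12 QX0 V1 N02; lra) | (clear - c4 c10 V1 QX2 N02; lra) | destruct QY2 as [QY2|QY2]; [ (clear - c41 c50 V1 N02 QY2; lra) | destruct N12 as [N12|[N12|[N12|N12]]]; [ destruct N23 as [N23|[N23|[N23|N23]]]; [ (clear - c47 N12 N23;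 lra) | (clear - c10 c12 QX3 V1 N23; lra) | (clear - c41 N02 N23; lra) | (clear - c14 c50 V1 QY3 N23; lra) ] | (clear - c10 QX1 V1 QX2 N12; lra) | (clear - c45 c62 QY0 V1 N12; lra) | (clear - c41 c50 N02 N12; lra) ] ] | (clear - c54 c57 QY0 V1 N02; lra) ] ] ] ] ] ] | destruct N01 as [N01|[N01|[N01|N01]]]; [ (clear - c2 c8 V0 N01; lra) | (clear - c0 c4 QX1 N01; lra) | destruct QY1 as [QY1|QY1]; [ (clear - c0 c5 N01 QY1; lra) | destruct N15 as [N15|[N15|[N15|N15]]]; [ (clear - c0 c24 QX1 N15; lra) | (clear - c2 c8 V5 N15; lra) | (clear - c45 N01 N15; lra) | destruct QY5 as [QY5|QY5]; [ destruct V2 as [V2|[V2|[V2|V2]]]; [ (clear - c59 V5 V2; lra) | destruct QX2 as [QX2|QX2]; [ (clear - c0 c2 V2 QX2; lra) | destruct V4 as [V4|[V4|[V4|V4]]]; [ (clear - c56 V2 V4; lra) | destruct QX4 as [QX4|QX4]; [ (clear - c0 c2 V4 QX4; lra) | destruct N02 as [N02|[N02|[N02|N02]]]; [ (clear - c2 c12 V0 N02; lra) | (clear - c2 c4 V2 N02; lra) | destruct QY2 as [QY2|QY2]; [ (clear - c0 c5 N02 QY2; lra) | destruct N12 as [N12|[N12|[N12|N12]]]; [ (clear - c0 c12 QX1 N12; lra) | (clear - c2 c8 V2 N12; lra) | (clear - c62 N15 N12; lra) | (clear - c41 c50 N02 N12; lra) ] ] | (clear - c54 c57 N01 N02; lra)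 ] ] | (clear - c0 c54 QY1 V4; lra) | (clear - c34 QY5 V4; lra) ] ] | (clear - c0 c13 V2; lra) | (clear - c62 QY5 V2; lra) ] | (clear - c0 c10 N15 QY5; lra) ] ] ] | (clear - c0 c9 QY0 N01; lra) ] ] ] | (clear - c0 c25 V5; lra) | (clear - c45 QY0 V5; lra) ] ] | (clear - c0 c17 V3; lra) | (clear - c41 QY0 V3; lra) ] | (clear - c0 c5 V0; lra) | (clear - QY0 V0; lra) ] | destruct V0 as [V0|[V0|[V0|V0]]]; [ (clear - c0 c1 QX0 V0; lra) | destruct QX1 as [QX1|QX1]; [ destruct V1 as [V1|[V1|[V1|V1]]]; [ (clear - c40 c47 V0 V1; lra) | (clear - c0 c2 QX1 V1; lra) | (clear - c0 c9 V1; lra) | destruct QY1 as [QY1|QY1]; [ (clear - V1 QY1; lra) | destruct QY3 as [QY3|QY3]; [ (clear - c50 V1 QY3; lra) | destruct QY4 as [QY4|QY4]; [ (clear - c54 V1 QY4; lra) | destruct N01 as [N01|[N01|[N01|N01]]]; [ (clear - c10 QX0 QX1 V1 N01; lra) | destruct N04 as [N04|[N04|[N04|N04]]]; [ (clear - c51 N01 N04; lra) | destruct QX4 as [QX4|QX4]; [ destruct V4 as [V4|[V4|[V4|V4]]]; [ (clear - c31 c44 V0 V4; lra) | (clear - c2 c10 V1 QX4 V4; lra) | (clear - c54 V1 V4; lra) | destruct QY2 as [QY2|QY2]; [ (clear - c57 V4 QY2; lra) | destruct QY5 as [QY5|QY5]; [ (clear - c34 V4 QY5; lra) | destruct N02 as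 [N02|[N02|[N02|N02]]]; [ (clear - c56 N04 N02; lra) | destruct QX2 as [QX2|QX2]; [ destruct V2 as [V2|[V2|[V2|V2]]]; [ (clear - c44 c59 V0 V2; lra) | (clear - c2 c22 V4 QX2 V2; lra) | (clear - c57 V4 V2; lra) | destruct N12 as [N12|[N12|[N12|N12]]]; [ (clear - c40 c47 N02 N12; lra) | (clear - c44 c59 N01 N12; lra) | (clear - c14 QY1 V2 N12; lra) | (clear - c10 QY2 V2 N12; lra) ] ] | (clear - c4 c22 V4 N02 QX2; lra) ] | (clear - c14 c22 QY0 V4 N02; lra) | (clear - c6 c57 V4 QY2 N02; lra) ] ] ] ] | (clear - c4 c10 V1 N04 QX4; lra) ] | (clear - c10 c22 QY0 V1 N04; lra) | (clear - c6 c54 V1 QY4 N04; lra) ] | (clear - c10 QY0 V1 N01; lra) | (clear - c6 V1 QY1 N01; lra) ] ] ] ] ] | destruct N01 as [N01|[N01|[N01|N01]]]; [ (clear - c2 c8 V0 N01; lra) | (clear - c0 c4 QX1 N01; lra) | (clear - c0 c10 QY0 N01; lra) | destruct QY1 as [QY1|QY1]; [ destruct V1 as [V1|[V1|[V1|V1]]]; [ (clear - c40 c47 V0 V1; lra) | destruct V3 as [V3|[V3|[V3|V3]]]; [ (clear - c48 V1 V3; lra) | destruct QX3 as [QX3|QX3]; [ (clear - c0 c2 V3 QX3; lra) | destruct V4 as [V4|[V4|[V4|V4]]]; [ (clear - c52 V1 V4; lra) | destruct QX4 as [QX4|QX4]; [ (clear - c0 c2 V4 QX4; lra) | destruct N04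 as [N04|[N04|[N04|N04]]]; [ (clear - c2 c20 V0 N04; lra) | (clear - c2 c4 V4 N04; lra) | (clear - c53 N01 N04; lra) | destruct QY4 as [QY4|QY4]; [ destruct V2 as [V2|[V2|[V2|V2]]]; [ (clear - c55 V4 V2; lra) | destruct QX2 as [QX2|QX2]; [ (clear - c0 c2 V2 QX2; lra) | destruct V5 as [V5|[V5|[V5|V5]]]; [ (clear - c60 V2 V5; lra) | destruct QX5 as [QX5|QX5]; [ (clear - c0 c2 V5 QX5; lra) | destruct N02 as [N02|[N02|[N02|N02]]]; [ (clear - c2 c12 V0 N02; lra) | (clear - c2 c4 V2 N02; lra) | (clear - c58 N04 N02; lra) | destruct QY2 as [QY2|QY2]; [ destruct N12 as [N12|[N12|[N12|N12]]]; [ (clear - c2 c12 V1 N12; lra) | (clear - c2 c8 V2 N12; lra) | (clear - c42 c49 N02 N12; lra) | (clear - c46 c61 N01 N12; lra) ] | (clear - c0 c6 N02 QY2; lra) ] ] ] | (clear - c0 c46 QY0 V5; lra) | (clear - c33 QY4 V5; lra) ] ] | (clear - c0 c13 V2; lra) | (clear - c58 QY4 V2; lra) ] | (clear - c0 c6 N04 QY4; lra) ] ] ] | (clear - c0 c21 V4; lra) | (clear - c53 QY1 V4; lra) ] ] | (clear - c0 c42 QY0 V3; lra) | (clear - c49 QY1 V3; lra) ] | (clear - c0 c9 V1; lra) | (clear - QY1 V1; lra) ] | (clear - c0 c6 N01 QY1; lra) ] ] ] | (clear - c0 QY0 V0; lra) | destruct QY3 as [QY3|QY3]; [ (clear - c42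 V0 QY3; lra) | destruct QY5 as [QY5|QY5]; [ (clear - c46 V0 QY5; lra) | destruct QX1 as [QX1|QX1]; [ destruct V1 as [V1|[V1|[V1|V1]]]; [ (clear - c1 c6 c7 V0 V1; lra) | (clear - c2 c6 V0 QX1 V1; lra) | (clear - c42 c49 V0 V1; lra) | destruct QY1 as [QY1|QY1]; [ (clear - V1 QY1; lra) | destruct QY4 as [QY4|QY4]; [ (clear - c54 V1 QY4; lra) | destruct N01 as [N01|[N01|[N01|N01]]]; [ (clear - c10 QX0 QX1 V1 N01; lra) | destruct N04 as [N04|[N04|[N04|N04]]]; [ (clear - c51 N01 N04; lra) | destruct QX4 as [QX4|QX4]; [ destruct V4 as [V4|[V4|[V4|V4]]]; [ (clear - c1 c10 c19 V1 V4; lra) | (clear - c2 c10 V1 QX4 V4; lra) | (clear - c54 V1 V4; lra) | destruct QY2 as [QY2|QY2]; [ (clear - c57 V4 QY2; lra) | destruct N02 as [N02|[N02|[N02|N02]]]; [ (clear - c56 N04 N02; lra) | destruct QX2 as [QX2|QX2]; [ destruct V2 as [V2|[V2|[V2|V2]]]; [ (clear - c1 c11 c22 V4 V2; lra) | (clear - c2 c22 V4 QX2 V2; lra) | (clear - c57 V4 V2; lra) | destruct N12 as [N12|[N12|[N12|N12]]]; [ (clear - c40 c47 N02 N12; lra) | (clear - c44 c59 N01 N12; lra) | (clear - c14 QY1 V2 N12; lra) | (clear - c10 QY2 V2 N12; lra) ] ] | (clear - c4 c22 V4 N02 QX2; lra) ] | (clear - c14 V0 QY2 N02; lra) | (clear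 - c6 V0 QY2 N02; lra) ] ] ] | (clear - c4 c10 V1 N04 QX4; lra) ] | (clear - c22 V0 QY4 N04; lra) | (clear - c6 V0 QY4 N04; lra) ] | (clear - c10 V0 QY1 N01; lra) | (clear - c6 V1 QY1 N01; lra) ] ] ] ] | destruct N01 as [N01|[N01|[N01|N01]]]; [ (clear - c6 c8 QX0 V0 N01; lra) | (clear - c4 c6 V0 QX1 N01; lra) | (clear - c10 QY0 V0 N01; lra) | destruct QY1 as [QY1|QY1]; [ destruct V1 as [V1|[V1|[V1|V1]]]; [ (clear - c1 c6 V0 QX1 V1; lra) | destruct V3 as [V3|[V3|[V3|V3]]]; [ (clear - c48 V1 V3; lra) | destruct QX3 as [QX3|QX3]; [ (clear - c2 c6 V0 V3 QX3; lra) | destruct V4 as [V4|[V4|[V4|V4]]]; [ (clear - c52 V1 V4; lra) | destruct QX4 as [QX4|QX4]; [ (clear - c2 c6 V0 V4 QX4; lra) | destruct N04 as [N04|[N04|[N04|N04]]]; [ (clear - c6 c20 QX0 V0 N04; lra) | (clear - c4 c6 V0 QX4 N04; lra) | (clear - c53 N01 N04; lra) | destruct QY4 as [QY4|QY4]; [ destruct V2 as [V2|[V2|[V2|V2]]]; [ (clear - c55 V4 V2; lra) | destruct QX2 as [QX2|QX2]; [ (clear - c2 c6 V0 V2 QX2; lra) | destruct V5 as [V5|[V5|[V5|V5]]]; [ (clear - c60 V2 V5; lra) | destruct QX5 as [QX5|QX5]; [ (clear - c2 c6 V0 V5 QX5; lra) | destruct N02 as [N02|[N02|[N02|N02]]];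 [ (clear - c6 c12 QX0 V0 N02; lra) | (clear - c4 c6 V0 QX2 N02; lra) | (clear - c58 N04 N02; lra) | destruct QY2 as [QY2|QY2]; [ destruct N12 as [N12|[N12|[N12|N12]]]; [ (clear - c6 c12 V0 QX1 N12; lra) | (clear - c6 c8 V0 QX2 N12; lra) | (clear - c42 c49 N02 N12; lra) | (clear - c46 c61 N01 N12; lra) ] | (clear - c6 V0 N02 QY2; lra) ] ] ] | (clear - c46 V0 V5; lra) | (clear - c33 QY4 V5; lra) ] ] | (clear - c46 c61 V0 V2; lra) | (clear - c58 QY4 V2; lra) ] | (clear - c6 V0 N04 QY4; lra) ] ] ] | (clear - c33 c46 V0 V4; lra) | (clear - c53 QY1 V4; lra) ] ] | (clear - c42 V0 V3; lra) | (clear - c49 QY1 V3; lra) ] | (clear - c42 c49 V0 V1; lra) | (clear - QY1 V1; lra) ] | (clear - c6 V0 N01 QY1; lra) ] ] ] ] ] ] ] ].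
Qed.

Lemma core_nice (a m x0 y0 x1 y1 x2 y2 x3 y3 x4 y4 x5 y5 : R) (Hm : 0 <= m) (Hma : m <= a) (Ha1 : a <= 1) (B0 : -1 <= x0 <= 1 /\ -1 <= y0 <= 1) (B1 : -1 <= x1 <= 1 /\ -1 <= y1 <= 1) (B2 : -1 <= x2 <= 1 /\ -1 <= y2 <= 1) (B3 : -1 <= x3 <= 1 /\ -1 <= y3 <= 1) (B4 : -1 <= x4 <= 1 /\ -1 <= y4 <= 1) (B5 : -1 <= x5 <= 1 /\ -1 <= y5 <= 1) (A34 : (-1 <= x3 - x4 <= 1 /\ -1 <= y3 - y4 <= 1)) (A45 : (-1 <= x4 - x5 <= 1 /\ -1 <= y4 - y5 <= 1)) (A35 : (-1 <= x3 - x5 <= 1 /\ -1 <= y3 - y5 <= 1)) (A03 : (-1 <= x0 - x3 <= 1 /\ -1 <= y0 - y3 <= 1)) (A05 : (-1 <= x0 - x5 <= 1 /\ -1 <= y0 - y5 <= 1)) (A13 : (-1 <= x1 - x3 <= 1 /\ -1 <= y1 - y3 <= 1)) (A14 : (-1 <= x1 - x4 <= 1 /\ -1 <= y1 - y4 <= 1)) (A24 : (-1 <= x2 - x4 <= 1 /\ -1 <= y2 - y4 <= 1)) (A25 : (-1 <= x2 - x5 <= 1 /\ -1 <= y2 - y5 <= 1)) (QX0 : m <= x0 \/ x0 <= -m) (QY0 : m <= y0 \/ y0 <= -m) (V0 : (x0 - a > 1 \/ a - x0 > 1 \/ y0 - m > 1 \/ m - y0 > 1)) (QX1 : m <= x1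 \/ x1 <= -m) (QY1 : m <= y1 \/ y1 <= -m) (V1 : (x1 - a > 1 \/ a - x1 > 1 \/ y1 - m > 1 \/ m - y1 > 1)) (QX2 : m <= x2 \/ x2 <= -m) (QY2 : m <= y2 \/ y2 <= -m) (V2 : (x2 - a > 1 \/ a - x2 > 1 \/ y2 - m > 1 \/ m - y2 > 1)) (QX3 : m <= x3 \/ x3 <= -m) (QY3 : m <= y3 \/ y3 <= -m) (V3 : (x3 - a > 1 \/ a - x3 > 1 \/ y3 - m > 1 \/ m - y3 > 1)) (QX4 : m <= x4 \/ x4 <= -m) (QY4 : m <= y4 \/ y4 <= -m) (V4 : (x4 - a > 1 \/ a - x4 > 1 \/ y4 - m > 1 \/ m - y4 > 1)) (QX5 : m <= x5 \/ x5 <= -m) (QY5 : m <= y5 \/ y5 <= -m) (V5 : (x5 - a > 1 \/ a - x5 > 1 \/ y5 - m > 1 \/ m - y5 > 1)) (N01 : (x0 - x1 > 1 \/ x1 - x0 > 1 \/ y0 - y1 > 1 \/ y1 - y0 > 1)) (N02 : (x0 - x2 > 1 \/ x2 - x0 > 1 \/ y0 - y2 > 1 \/ y2 - y0 > 1)) (N12 : (x1 - x2 > 1 \/ x2 - x1 > 1 \/ y1 - y2 > 1 \/ y2 - y1 > 1)) (N04 : (x0 - x4 > 1 \/ x4 - x0 > 1 \/ y0 - y4 > 1 \/ y4 - y0 > 1)) (N15 : (x1 - x5 > 1 \/ x5 - x1 > 1 \/ y1 - y5 > 1 \/ y5 - y1 > 1)) (N23 : (x2 - x3 > 1 \/ x3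 - x2 > 1 \/ y2 - y3 > 1 \/ y3 - y2 > 1)) : False.
Proof.
repeat match goal with H : _ /\ _ |- _ => destruct H end.
eapply (core (a:=a) (m:=m) (x0:=x0) (y0:=y0) (x1:=x1) (y1:=y1) (x2:=x2) (y2:=y2) (x3:=x3) (y3:=y3) (x4:=x4) (y4:=y4) (x5:=x5) (y5:=y5)).
all: first [ eassumption | lra ].
Qed.

Definition boxp (p : R * R) : Prop := -1 <= fst p <= 1 /\ -1 <= snd p <= 1.
Definition mm (p : R * R) : R := Rmin (Rabs (fst p)) (Rabs (snd p)).

Ltac absx t := let h := fresh "h" in destruct (Rcase_abs t) as [h|h];
  [pose proof (Rabs_left t h) | pose proof (Rabs_right t h)].

Lemma le1_conj p q : linf_dist p q <= 1 ->
  -1 <= fst p - fst q <= 1 /\ -1 <= snd p - snd q <= 1.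
Proof.
unfold linf_dist; intro H.
pose proof (Rmax_l (Rabs (fst p - fst q)) (Rabs (snd p - snd q))).
pose proof (Rmax_r (Rabs (fst p - fst q)) (Rabs (snd p - snd q))).
absx (fst p - fst q); absx (snd p - snd q); lra.
Qed.

Lemma gt1_disj p q : linf_dist p q > 1 ->
  fst p - fst q > 1 \/ fst q - fst p > 1 \/ snd p - snd q > 1 \/ snd q - snd p > 1.
Proof.
unfold linf_dist; intro H.
destruct (Rle_dec (Rabs (fst p - fst q)) (Rabs (snd p - snd q))) as [Hl|Hl].
- pose proof (Rmax_right _ _ Hl).
  absx (fst p - fst q); absx (snd p - snd q); lra.
- assert (Hl' : Rabs (snd p - snd q) <= Rabs (fst p - fst q)) by lra.
  pose proof (Rmax_left _ _ Hl').
  absx (fst p - fst q); absx (snd p - snd q); lra.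
Qed.

Lemma quad_x m p : m <= mm p -> m <= fst p \/ fst p <= - m.
Proof.
unfold mm; intro H.
pose proof (Rmin_l (Rabs (fst p)) (Rabs (snd p))).
absx (fst p); lra.
Qed.

Lemma quad_y m p : m <= mm p -> m <= snd p \/ snd p <= - m.
Proof.
unfold mm; intro H.
pose proof (Rmin_r (Rabs (fst p)) (Rabs (snd p))).
absx (snd p); lra.
Qed.

Lemma mm_norm v : 0 <= snd v <= fst v -> mm v = snd v.
Proof.
intro H; unfold mm.
assert (Hl : Rabs (snd v) <= Rabs (fst v)) by (absx (fst v); absx (snd v); lra).
pose proof (Rmin_right _ _ Hl); absx (fst v); absx (snd v); lra.
Qed.

Lemma core_sem (v p0 p1 p2 p3 p4 p5 : R * R) :
  0 <= snd v <= fst v -> fst v <= 1 ->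
  boxp p0 -> boxp p1 -> boxp p2 -> boxp p3 -> boxp p4 -> boxp p5 ->
  linf_dist p0 v > 1 -> linf_dist p1 v > 1 -> linf_dist p2 v > 1 ->
  linf_dist p3 v > 1 -> linf_dist p4 v > 1 -> linf_dist p5 v > 1 ->
  mm v <= mm p0 -> mm v <= mm p1 -> mm v <= mm p2 ->
  mm v <= mm p3 -> mm v <= mm p4 -> mm v <= mm p5 ->
  linf_dist p3 p4 <= 1 -> linf_dist p4 p5 <= 1 -> linf_dist p3 p5 <= 1 ->
  linf_dist p0 p3 <= 1 -> linf_dist p0 p5 <= 1 -> linf_dist p1 p3 <= 1 ->
  linf_dist p1 p4 <= 1 -> linf_dist p2 p4 <= 1 -> linf_dist p2 p5 <= 1 ->
  linf_dist p0 p1 > 1 -> linf_dist p0 p2 > 1 -> linf_dist p1 p2 > 1 ->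
  linf_dist p0 p4 > 1 -> linf_dist p1 p5 > 1 -> linf_dist p2 p3 > 1 ->
  False.
Proof.
intros Hv Hv1 B0 B1 B2 B3 B4 B5 V0 V1 V2 V3 V4 V5 M0 M1 M2 M3 M4 M5
  A34 A45 A35 A03 A05 A13 A14 A24 A25 N01 N02 N12 N04 N15 N23.
rewrite (mm_norm Hv) in M0, M1, M2, M3, M4, M5.
apply (core_nice (a := fst v) (m := snd v)
  (x0 := fst p0) (y0 := snd p0) (x1 := fst p1) (y1 := snd p1) (x2 := fst p2) (y2 := snd p2)
  (x3 := fst p3) (y3 := snd p3) (x4 := fst p4) (y4 := snd p4) (x5 := fst p5) (y5 := snd p5));
  try lra; try assumption;
  try (apply le1_conj; assumption);
  try (apply gt1_disj; assumption);
  try (apply quad_x; assumption);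
  try (apply quad_y; assumption).
Qed.

Definition tr (s1 s2 sw : bool) (p : R * R) : R * R :=
  let q := if sw then (snd p, fst p) else p in
  ((if s1 then - fst q else fst q), (if s2 then - snd q else snd q)).

Lemma Rabs_opp_sub x y : Rabs (- x - - y) = Rabs (x - y).
Proof. replace (- x - - y) with (- (x - y)) by ring. apply Rabs_Ropp. Qed.

Lemma linf_tr s1 s2 sw p q : linf_dist (tr s1 s2 sw p) (tr s1 s2 sw q) = linf_dist p q.
Proof.
destruct p as [x y], q as [x' y']; unfold linf_dist, tr.
destruct s1, s2, sw; simpl; rewrite ?Rabs_opp_sub; try reflexivity; apply Rmax_comm.
Qed.

Lemma mm_tr s1 s2 sw p : mm (tr s1 s2 sw p) = mm p.
Proof.
destruct p as [x y]; unfold mm, tr.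
destruct s1, s2, sw; simpl; rewrite ?Rabs_Ropp; try reflexivity; apply Rmin_comm.
Qed.

Lemma box_tr s1 s2 sw p : boxp p -> boxp (tr s1 s2 sw p).
Proof.
destruct p as [x y]; unfold boxp, tr; destruct s1, s2, sw; simpl; lra.
Qed.

Lemma normalize p : exists s1 s2 sw, 0 <= snd (tr s1 s2 sw p) <= fst (tr s1 s2 sw p).
Proof.
destruct p as [x y]; unfold tr; simpl.
destruct (Rle_dec (Rabs y) (Rabs x)) as [Hc|Hc].
- exists (if Rle_dec 0 x then false else true), (if Rle_dec 0 y then false else true), false.
  destruct (Rle_dec 0 x), (Rle_dec 0 y); simpl; absx x; absx y; lra.
- exists (if Rle_dec 0 y then false else true), (if Rle_dec 0 x then false else true), true.
  destruct (Rle_dec 0 x), (Rle_dec 0 y); simpl; absx x; absx y; lra.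
Qed.

Lemma exists_min (T : eqType) (g : T -> R) (l : seq T) (x0 : T) :
  exists v, forall w, w \in x0 :: l -> g v <= g w.
Proof.
elim: l x0 => [|y l IH] x0.
- exists x0 => w; rewrite inE => /eqP ->; lra.
- have [v Hv] := IH y.
  destruct (Rle_dec (g x0) (g v)) as [H|H].
  + exists x0 => w; rewrite inE => /orP [/eqP ->|Hw]; [lra|].
    have := Hv w Hw; lra.
  + exists v => w; rewrite inE => /orP [/eqP ->|Hw]; [lra|].
    exact: Hv.
Qed.

Lemma linf_sym p q : linf_dist p q = linf_dist q p.
Proof.
unfold linf_dist; rewrite (Rabs_minus_sym (fst p)) (Rabs_minus_sym (snd p)); reflexivity.
Qed.

Close Scope R_scope.

Theorem mainTheorem19 (T : finType) (e : rel T)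
  (e_irrefl : irreflexive e)
  (hG : nbhd_unit_square_graph e)
  (hne : (0 < #|T|)%N) :
  ~ (forall v : T, in_X e v).
Proof.
move=> Hall.
case: hG => f [Hbox Hadj].
have [x0 _] : exists x : T, true.
  by case/card_gt0P: hne => x _; exists x.
have [v0 Hmin] := exists_min (fun x => mm (f x)) (enum T) x0.
have Hmin' : forall w, (mm (f v0) <= mm (f w))%R.
  by move=> w; apply: Hmin; rewrite inE mem_enum orbT.
have [w [winj [Hwv Hww]]] := Hall v0.
have [s1 [s2 [sw Hn]]] := normalize (f v0).
pose tp x := tr s1 s2 sw (f x).
pose o0 := @Ordinal 6 0 isT. pose o1 := @Ordinal 6 1 isT. pose o2 := @Ordinal 6 2 isT.
pose o3 := @Ordinal 6 3 isT. pose o4 := @Ordinal 6 4 isT. pose o5 := @Ordinal 6 5 isT.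
have HV : forall i, (linf_dist (tp (w i)) (tp v0) > 1)%R.
  move=> i; rewrite /tp linf_tr linf_sym.
  have [hne1 hne2] := Hwv i.
  have H := Hadj v0 (w i) (fun h => hne1 (esym h)).
  destruct (Rle_dec (linf_dist (f v0) (f (w i))) 1) as [Hl|Hl].
  - by exfalso; apply: hne2; apply H.
  - by apply Rnot_le_gt.
have HM : forall i, (mm (tp v0) <= mm (tp (w i)))%R.
  by move=> i; rewrite /tp !mm_tr.
have HB : forall x, boxp (tp x) by move=> x; apply box_tr; apply Hbox.
have HE : forall i j, i <> j -> s3_adj i j -> (linf_dist (tp (w i)) (tp (w j)) <= 1)%R.
  move=> i j hij hs; rewrite /tp linf_tr.
  have hw : w i <> w j by move=> h; apply: hij; apply: winj.
  by apply (Hadj _ _ hw); apply (Hww i j hij).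
have HN : forall i j, i <> j -> ~~ s3_adj i j -> (linf_dist (tp (w i)) (tp (w j)) > 1)%R.
  move=> i j hij hs; rewrite /tp linf_tr.
  have hw : w i <> w j by move=> h; apply: hij; apply: winj.
  apply Rnot_le_gt => hl; move/negP: hs; apply; apply (Hww i j hij).
  by apply (Hadj _ _ hw).
have Hv1 : (fst (tp v0) <= 1)%R by have := HB v0; rewrite /boxp; lra.
apply (@core_sem (tp v0) (tp (w o0)) (tp (w o1)) (tp (w o2)) (tp (w o3)) (tp (w o4)) (tp (w o5)));
  try exact Hn; try exact Hv1; try apply HB; try apply HV; try apply HM;
  try (apply HE; [by move=> /(congr1 (@nat_of_ord 6)) | by []]);
  try (apply HN; [by move=> /(congr1 (@nat_of_ord 6)) | by []]).
Qed.
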